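(* Let $\mathbb X$ be a Euclidean space, $g\colon\mathbb X\to\mathbb R^m$ twice continuously differentiable, $D\subset\mathbb R^m$ convex and polyhedral, $\Phi(x):=g(x)-D$, $(\bar x,0)\in\operatorname{gph}\Phi$, and $u\in\mathbb S_{\mathbb X}$ with $\nabla g(\bar x)u\in\mathcal T_D(g(\bar x))$. For $y^*,z^*\in\mathbb R^m$ let $\mathrm{C}(u,y^*,z^* )$ denote the conditions $\nabla g(\bar x)^*y^*=0$, $\nabla^2\langle y^*,g\rangle(\bar x)(u)+\nabla g(\bar x)^*z^*=0$, $y^*,z^*\in\mathcal N_D(g(\bar x))$. Then: (i) The 2-regularity condition $\operatorname{Im}\nabla g(\bar x)+\nabla^2g(\bar x)[u,\nabla g(\bar x)^{-1}\mathcal T_D(g(\bar x))]-\mathcal T_D(g(\bar x))=\mathbb R^m$ holds if and only if: for all $y^*,z^*$, $\mathrm{C}(u,y^*,z^* )$ implies $y^*=0$. (ii) The condition ''for all $y^*,z^*$: $\nabla g(\bar x)^*y^*=0$, $\nabla^2\langle y^*,g\rangle(\bar x)(u)+\nabla g(\bar x)^*z^*=0$, $y^*\in\mathcal N_{\mathcal T_D(g(\bar x))}(\nabla g(\bar x)u)$ and $z^*\in\mathcal N_{\mathcal T_D(g(\bar x))}(\nabla g(\bar x)u)$ (respectively, in the second variant, $z^*\in\mathcal T_{\mathcal N_{\mathcal T_D(g(\bar x))}(\nabla g(\bar x)u)}(y^* )$) imply $y^*=0$'' is (in either variant) equivalent to: for all $y^*,z^*$, $\mathrm{C}(u,y^*,z^*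 )$ together with $\langle z^*,\nabla g(\bar x)u\rangle=0$ implies $y^*=0$. (iii) Gfrerer's condition ''for all $y^*,z^*$: $\mathrm C(u,y^*,z^* )$ and $y^*\in\operatorname{argmax}\{\tfrac12\nabla^2\langle\hat y^*,g\rangle(\bar x)[u,u]\mid \hat y^*\in\mathcal N_D(g(\bar x))\cap\ker\nabla g(\bar x)^*\}$ imply $y^*=0$'', and the condition ''for each $s\in\mathbb X$ and all $y^*,z^*$: $\nabla g(\bar x)^*y^*=0$, $\nabla^2\langle y^*,g\rangle(\bar x)(u)+\nabla g(\bar x)^*z^*=0$, $y^*\in\mathcal N_{\mathbf T(u)}(w_s(u,0))$ and $z^*\in\mathcal N_{\mathbf T(u)}(w_s(u,0))$ (respectively, in the second variant, $z^*\in\mathcal T_{\mathcal N_{\mathbf T(u)}(w_s(u,0))}(y^* )$) imply $y^*=0$'' are both (the latter in either variant) equivalent to: for all $y^*,z^*\in\mathbb R^m$ and $s\in\mathbb X$, $\mathrm C(u,y^*,z^* )$ together with $w_s(u,0)\in\mathbf T(u)$ implies $y^*=0$.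
   Context: $\mathbb S_{\mathbb X}$ is the unit sphere; $\mathcal T_Q$ and $\mathcal N_Q$ are the tangent and (limiting, here convex-analysis) normal cones. $\nabla g(\bar x)$ is the derivative, $\nabla g(\bar x)^*$ its adjoint, $\nabla g(\bar x)^{-1}A:=\{s\mid\nabla g(\bar x)s\in A\}$; $\nabla^2\langle y^*,g\rangle(\bar x)(u)\in\mathbb X$ is the Hessian of $x\mapsto\langle y^*,g(x)\rangle$ at $\bar x$ applied to $u$, $\nabla^2\langle y^*,g\rangle(\bar x)[u,u]$ the associated quadratic form, $\nabla^2 g(\bar x)[u,s]:=(\langle u,\nabla^2g_i(\bar x)s\rangle)_{i=1}^m$ and $\nabla^2g(\bar x)[u,A]:=\{\nabla^2g(\bar x)[u,s]\mid s\in A\}$. $\mathbf T(u):=\mathcal T_{\mathcal T_D(g(\bar x))}(\nabla g(\bar x)u)$ and $w_s(u,0):=\nabla g(\bar x)s+\tfrac12\nabla^2g(\bar x)[u,u]$. *)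

(* Defs.v *)
(* X = 'rV[R]_n (Euclidean space, standard inner
   product), R^m = 'rV[R]_m.  Vectors are row vectors. *)
From HB Require Import structures.
From mathcomp Require Import all_boot all_order all_algebra.
From mathcomp Require Import all_classical all_reals all_analysis.
Set Implicit Arguments. Unset Strict Implicit. Unset Printing Implicit Defensive.
Import Order.TTheory GRing.Theory Num.Theory.
Import numFieldNormedType.Exports.
Local Open Scope classical_set_scope.
Local Open Scope ring_scope.

Section Defs.
Variable R : realType.

Definition ip k (a b : 'rV[R]_k) : R := \sum_(i < k) a 0 i * b 0 i.

Definition unit_sphere n (u : 'rV[R]_n) : Prop := ip u u = 1.

Definition evec n (j : 'I_n) : 'rV[R]_n := delta_mx 0 j.

Definition comp n m (g : 'rV[R]_n -> 'rV[R]_m) (i : 'I_m) : 'rV[R]_n -> R :=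
  fun x => g x 0 i.

Definition C2fun n (f : 'rV[R]_n -> R) : Prop :=
  [/\ continuous f,
      (forall v x, derivable f x v),
      (forall v, continuous ('D_v f)),
      (forall v w x, derivable ('D_v f) x w) &
      (forall v w, continuous ('D_w ('D_v f)))].

Definition C2map n m (g : 'rV[R]_n -> 'rV[R]_m) : Prop :=
  forall i, C2fun (comp g i).

Definition jacobian n m (g : 'rV[R]_n -> 'rV[R]_m) (x : 'rV[R]_n) : 'M[R]_(m, n) :=
  \matrix_(i, j) 'D_(evec j) (comp g i) x.

Definition hessian n (f : 'rV[R]_n -> R) (x : 'rV[R]_n) : 'M[R]_n :=
  \matrix_(j, k) 'D_(evec j) ('D_(evec k) f) x.

Definition lapp p q (M : 'M[R]_(p, q)) (v : 'rV[R]_q) : 'rV[R]_p := v *m M^T.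
Definition ladj p q (M : 'M[R]_(p, q)) (y : 'rV[R]_p) : 'rV[R]_q := y *m M.

Definition dg n m (g : 'rV[R]_n -> 'rV[R]_m) x u : 'rV[R]_m := lapp (jacobian g x) u.
Definition dg_adj n m (g : 'rV[R]_n -> 'rV[R]_m) x y : 'rV[R]_n := ladj (jacobian g x) y.

Definition d2yg n m (g : 'rV[R]_n -> 'rV[R]_m) (y : 'rV[R]_m) x (u : 'rV[R]_n)
  : 'rV[R]_n := lapp (hessian (fun z => ip y (g z)) x) u.

Definition d2yg_form n m (g : 'rV[R]_n -> 'rV[R]_m) (y : 'rV[R]_m) x (u : 'rV[R]_n)
  : R := ip u (d2yg g y x u).

Definition d2g n m (g : 'rV[R]_n -> 'rV[R]_m) x (u s : 'rV[R]_n) : 'rV[R]_m :=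
  \row_i ip u (lapp (hessian (comp g i) x) s).

(* (Bouligand) tangent cone of Q at x (empty if x \notin Q) *)
Definition tcone k (Q : set 'rV[R]_k) (x : 'rV[R]_k) : set 'rV[R]_k :=
  [set w | Q x /\ exists (t : nat -> R) (v : nat -> 'rV[R]_k),
     [/\ (forall j, 0 < t j), t @ \oo --> (0 : R), v @ \oo --> w &
         forall j, Q (x + t j *: v j)]].

(* normal cone in the sense of convex analysis (empty if x \notin Q);
   it is only applied to convex sets, where it agrees with the limiting one *)
Definition ncone k (Q : set 'rV[R]_k) (x : 'rV[R]_k) : set 'rV[R]_k :=
  [set y | Q x /\ forall q, Q q -> ip y (q - x) <= 0].

Definition polyhedral k (Q : set 'rV[R]_k) : Prop :=
  exists (p : nat) (a : 'I_p -> 'rV[R]_k) (b : 'I_p -> R),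
    Q = [set y | forall j, ip (a j) y <= b j].

Definition Ccond n m (g : 'rV[R]_n -> 'rV[R]_m) (D : set 'rV[R]_m) xb u y z : Prop :=
  [/\ dg_adj g xb y = 0,
      d2yg g y xb u + dg_adj g xb z = 0,
      ncone D (g xb) y &
      ncone D (g xb) z].

Definition w_s n m (g : 'rV[R]_n -> 'rV[R]_m) xb u s : 'rV[R]_m :=
  dg g xb s + 2^-1 *: d2g g xb u u.

Definition bT n m (g : 'rV[R]_n -> 'rV[R]_m) (D : set 'rV[R]_m) xb u : set 'rV[R]_m :=
  tcone (tcone D (g xb)) (dg g xb u).

End Defs.

(* Main.v *)
Require Import Defs.
From HB Require Import structures.
From mathcomp Require Import all_boot all_order all_algebra.
From mathcomp Require Import all_classical all_reals all_analysis.
From mathcomp Require Import ring lra.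
Import Order.TTheory GRing.Theory Num.Theory.
Import numFieldNormedType.Exports.
Local Open Scope classical_set_scope.
Local Open Scope ring_scope.
Set Implicit Arguments. Unset Strict Implicit. Unset Printing Implicit Defensive.
Section IP.
Variable R : realType.
Implicit Types (k : nat).

Lemma ip_sym k (a b : 'rV[R]_k) : ip a b = ip b a.
Proof. by rewrite /ip; apply: eq_bigr => i _; rewrite mulrC. Qed.

Lemma ipDl k (a a' b : 'rV[R]_k) : ip (a + a') b = ip a b + ip a' b.
Proof. by rewrite /ip -big_split; apply: eq_bigr => i _; rewrite mxE mulrDl. Qed.

Lemma ipZl k r (a b : 'rV[R]_k) : ip (r *: a) b = r * ip a b.
Proof. by rewrite /ip mulr_sumr; apply: eq_bigr => i _; rewrite mxE mulrA. Qed.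

Lemma ip0l k (b : 'rV[R]_k) : ip 0 b = 0.
Proof. by rewrite /ip big1 // => i _; rewrite mxE mul0r. Qed.

Lemma ipNl k (a b : 'rV[R]_k) : ip (- a) b = - ip a b.
Proof. by rewrite -scaleN1r ipZl mulN1r. Qed.

Lemma ipBl k (a a' b : 'rV[R]_k) : ip (a - a') b = ip a b - ip a' b.
Proof. by rewrite ipDl ipNl. Qed.

Lemma ipDr k (a b b' : 'rV[R]_k) : ip a (b + b') = ip a b + ip a b'.
Proof. by rewrite ip_sym ipDl !(ip_sym a). Qed.

Lemma ipZr k r (a b : 'rV[R]_k) : ip a (r *: b) = r * ip a b.
Proof. by rewrite ip_sym ipZl ip_sym. Qed.

Lemma ip0r k (a : 'rV[R]_k) : ip a 0 = 0.
Proof. by rewrite ip_sym ip0l. Qed.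

Lemma ipNr k (a b : 'rV[R]_k) : ip a (- b) = - ip a b.
Proof. by rewrite ip_sym ipNl ip_sym. Qed.

Lemma ipBr k (a b b' : 'rV[R]_k) : ip a (b - b') = ip a b - ip a b'.
Proof. by rewrite ipDr ipNr. Qed.

Lemma ip_suml k (I : finType) (F : I -> 'rV[R]_k) b :
  ip (\sum_i F i) b = \sum_i ip (F i) b.
Proof.
apply: (big_ind2 (fun x y => ip x b = y)); first exact: ip0l.
  by move=> x1 x2 y1 y2 <- <-; rewrite ipDl.
by [].
Qed.

Lemma ip_sumr k (I : finType) (F : I -> 'rV[R]_k) b :
  ip b (\sum_i F i) = \sum_i ip b (F i).
Proof. by rewrite ip_sym ip_suml; apply: eq_bigr => i _; rewrite ip_sym. Qed.

Lemma ip_ge0 k (a : 'rV[R]_k) : 0 <= ip a a.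
Proof. by rewrite /ip; apply: sumr_ge0 => i _; rewrite -expr2 sqr_ge0. Qed.

Lemma ip_eq0 k (a : 'rV[R]_k) : ip a a = 0 -> a = 0.
Proof.
move=> /eqP; rewrite /ip psumr_eq0; last by move=> i _; rewrite -expr2 sqr_ge0.
move=> /allP H; apply/rowP => i; rewrite mxE.
have := H i (mem_index_enum i); rewrite /= mulf_eq0 orbb; by move/eqP.
Qed.

Lemma ip_le0 k (a : 'rV[R]_k) : ip a a <= 0 -> a = 0.
Proof. by move=> H; apply: ip_eq0; apply/eqP; rewrite eq_le H ip_ge0. Qed.

Lemma ip_all0 k (a : 'rV[R]_k) : (forall x, ip a x = 0) -> a = 0.
Proof. by move=> H; apply: ip_eq0; apply: H. Qed.

Lemma ip_adj k l (y : 'rV[R]_k) (M : 'M[R]_(k, l)) (s : 'rV[R]_l) :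
  ip (y *m M) s = ip y (s *m M^T).
Proof.
rewrite /ip.
under eq_bigr do rewrite mxE big_distrl /=.
rewrite exchange_big /=; apply: eq_bigr => i _.
rewrite mxE big_distrr /=; apply: eq_bigr => j _.
by rewrite !mxE [s 0 j * _]mulrC mulrA.
Qed.

Lemma ip_row_mx k l (a c : 'rV[R]_k) (b d : 'rV[R]_l) :
  ip (row_mx a b) (row_mx c d) = ip a c + ip b d.
Proof.
rewrite /ip big_split_ord /=; congr (_ + _); apply: eq_bigr => i _;
by rewrite ?row_mxEl ?row_mxEr.
Qed.

Lemma ip_evec k (j : 'I_k) (v : 'rV[R]_k) : ip (evec R j) v = v 0 j.
Proof.
rewrite /ip (bigD1 j) //= big1 ?addr0; first by rewrite /evec mxE !eqxx mul1r.
by move=> i /negPf ij; rewrite /evec mxE ij andbF mul0r.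
Qed.

Lemma ip_const1 (a b : 'rV[R]_1) : ip a b = a 0 0 * b 0 0.
Proof. by rewrite /ip big_ord1. Qed.

End IP.
Section Farkas.
Variable R : realType.

Lemma sum_seq_le0 (I : eqType) (r : seq I) (F : I -> R) :
  (forall i, i \in r -> F i <= 0) -> \sum_(i <- r) F i <= 0.
Proof.
move=> H; rewrite big_seq_cond; apply: (big_ind (fun x : R => x <= 0)) => //.
  by move=> x y hx hy; lra.
by move=> i /andP [ir _]; exact: H.
Qed.

Lemma GF_seq N (I : eqType) (r : seq I) : uniq r ->
  forall (a : I -> 'rV[R]_N) (c : 'rV[R]_N),
  (exists lam : I -> R, (forall i, 0 <= lam i) /\ c = \sum_(i <- r) lam i *: a i) \/
  (exists w, (forall i, i \in r -> ip (a i) w <= 0) /\ 0 < ip c w).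
Proof.
elim: r => [|i0 r IH] /= Hu a c.
  have [->|c0] := eqVneq c 0.
    by left; exists (fun _ => 0); split => //; rewrite big_nil.
  right; exists c; split => //; rewrite lt_def ip_ge0 andbT.
  by apply/eqP => /ip_eq0 /eqP; rewrite (negPf c0).
move: Hu => /andP [ni0 Hu].
case: (IH Hu a c) => [[lam [lam0 Hc]] | [w [Hw Hcw]]].
  left; exists (fun i => if i == i0 then 0 else lam i); split.
    by move=> i; case: ifP.
  rewrite big_cons eqxx scale0r add0r Hc; apply: eq_big_seq => i ir.
  by case: eqP => // ii0; move: ni0; rewrite -ii0 ir.
have [ai0w|ai0w] := lerP (ip (a i0) w) 0.
  right; exists w; split => // i; rewrite inE => /orP [/eqP -> //|]; exact: Hw.
set be := ip (a i0) w.
have be0 : be != 0 by rewrite gt_eqF.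
pose a' i := a i - (ip (a i) w / be) *: a i0.
pose c' := c - (ip c w / be) *: a i0.
case: (IH Hu a' c') => [[mu [mu0 Hc']] | [w' [Hw' Hcw']]].
  left.
  pose k := (ip c w - \sum_(i <- r) mu i * ip (a i) w) / be.
  exists (fun i => if i == i0 then k else mu i); split.
    move=> j; case: ifP => // _; rewrite /k divr_ge0 ?(ltW ai0w) //.
    rewrite subr_ge0; apply: le_trans (ltW Hcw).
    apply: sum_seq_le0 => l lr; rewrite mulr_ge0_le0 //; exact: Hw.
  rewrite big_cons eqxx.
  have -> : \sum_(j <- r) (if j == i0 then k else mu j) *: a j =
            \sum_(j <- r) mu j *: a j.
    apply: eq_big_seq => j jr.
    by case: eqP => // ji0; move: ni0; rewrite -ji0 jr.
  have E : c = c' + (ip c w / be) *: a i0 by rewrite /c' subrK.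
  rewrite E Hc' /a'.
  have -> : \sum_(i <- r) mu i *: (a i - (ip (a i) w / be) *: a i0) =
     \sum_(i <- r) mu i *: a i - (\sum_(i <- r) mu i * (ip (a i) w / be)) *: a i0.
    rewrite scaler_suml -sumrB; apply: eq_bigr => i _.
    by rewrite scalerBr scalerA.
  have -> : k = ip c w / be - \sum_(i <- r) mu i * (ip (a i) w / be).
    rewrite /k mulrBl; congr (_ - _); rewrite mulr_suml; apply: eq_bigr => i _.
    by rewrite mulrA.
  by rewrite scalerBl addrC addrA [LHS]addrAC.
right.
exists (w' - (ip (a i0) w' / be) *: w); split.
  move=> i; rewrite inE => /orP [/eqP ->|ir].
    by rewrite ipBr ipZr -/be divfK // subrr.
  have := Hw' i ir; rewrite /a' ipBl ipZl ipBr ipZr.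
  have -> : ip (a i) w / be * ip (a i0) w' = ip (a i0) w' / be * ip (a i) w by ring.
  by [].
move: Hcw'; rewrite /c' ipBl ipZl ipBr ipZr.
have -> : ip c w / be * ip (a i0) w' = ip (a i0) w' / be * ip c w by ring.
by [].
Qed.

Lemma GF N (I : finType) (a : I -> 'rV[R]_N) (c : 'rV[R]_N) :
  (exists lam : I -> R, (forall i, 0 <= lam i) /\ c = \sum_i lam i *: a i) \/
  (exists w, (forall i, ip (a i) w <= 0) /\ 0 < ip c w).
Proof.
case: (GF_seq (index_enum_uniq I) a c) => [[lam [H1 H2]]|[w [H1 H2]]].
  by left; exists lam.
by right; exists w; split => // i; apply: H1; rewrite mem_index_enum.
Qed.

Lemma AF N (I : finType) (G : I -> 'rV[R]_N) (b : I -> R) :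
  (exists x, forall i, ip (G i) x <= b i) \/
  (exists lam : I -> R, (forall i, 0 <= lam i) /\
     (forall x, \sum_i lam i * ip (G i) x = 0) /\ \sum_i lam i * b i < 0).
Proof.
pose a i : 'rV[R]_(N + 1) := row_mx (G i) (const_mx (b i)).
pose c : 'rV[R]_(N + 1) := row_mx 0 (const_mx (-1)).
case: (GF a c) => [[lam [lam0 Hc]]|[w [Hw Hcw]]].
  right; exists lam; split => //; split.
    move=> x.
    have := congr1 (fun v => ip v (row_mx x 0)) Hc => /=.
    rewrite ip_suml /c ip_row_mx ip0l ip0r add0r => H; rewrite [RHS]H.
    by apply: eq_bigr => i _; rewrite ipZl /a ip_row_mx ip0r addr0.
  have := congr1 (fun v => ip v (row_mx 0 (const_mx 1))) Hc => /=.
  rewrite ip_suml /c ip_row_mx ip0l add0r ip_const1 !mxE mulr1.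
  have -> : \sum_i ip (lam i *: a i) (row_mx 0 (const_mx 1)) = \sum_i lam i * b i.
    by apply: eq_bigr => i _; rewrite ipZl /a ip_row_mx ip0r add0r ip_const1 !mxE mulr1.
  by move=> <-; rewrite ltrN10.
left.
have Ew := hsubmxK w.
set x' := lsubmx w in Ew; set tau := rsubmx w in Ew.
have Ht : 0 < - tau 0 0.
  by move: Hcw; rewrite /c -Ew ip_row_mx ip0l add0r ip_const1 mxE mulN1r.
exists ((- tau 0 0)^-1 *: x') => i.
rewrite ipZr mulrC ler_pdivrMr //.
have := Hw i; rewrite /a -Ew ip_row_mx ip_const1 mxE.
by rewrite mulrN; lra.
Qed.

End Farkas.
Section Cones.
Variable R : realType.

Lemma cvg_ip k (p : 'rV[R]_k) (v_ : nat -> 'rV[R]_k) w :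
  v_ @ \oo --> w -> (fun j => ip p (v_ j)) @ \oo --> ip p w.
Proof.
move=> Hv.
have He i : (fun j => v_ j 0 i) @ \oo --> w 0 i.
  exact: (@continuous_cvg _ _ _ _ _ v_ (fun M : 'rV[R]_k => M 0 i) w
          (@coord_continuous _ _ _ 0 i w) Hv).
rewrite /ip; elim: (index_enum _) => [|i r IH].
  have -> : (fun j => \sum_(i <- [::]) p 0 i * v_ j 0 i) = (fun _ => 0).
    by apply/funext => j; rewrite big_nil.
  rewrite big_nil; exact: cvg_cst.
have -> : (fun j => \sum_(i0 <- i :: r) p 0 i0 * v_ j 0 i0) =
   (fun j => p 0 i * v_ j 0 i) + (fun j => \sum_(i0 <- r) p 0 i0 * v_ j 0 i0).
  by apply/funext => j; rewrite big_cons.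
rewrite big_cons; apply: cvgD => //.
exact: cvgMl_tmp.
Qed.

Lemma lim_ip_le0 k (p : 'rV[R]_k) (v_ : nat -> 'rV[R]_k) w :
  v_ @ \oo --> w -> (forall j, ip p (v_ j) <= 0) -> ip p w <= 0.
Proof.
move=> Hv H; have Hc := @cvg_ip k p v_ w Hv.
apply: (closed_cvg [set r : R | r <= 0] (@closed_le R 0) _ _ Hc).
by apply: nearW => j; exact: H.
Qed.

Lemma harm_cvg (t0 : R) : (fun j => t0 * harmonic j) @ \oo --> 0.
Proof.
have H := @cvgMl_tmp R nat \oo _ (@harmonic R) t0 0 (@cvg_harmonic R).
rewrite mulr0 in H; apply: H; typeclasses eauto.
Qed.

Lemma tcone_seg k (Q : set 'rV[R]_k) x v (t0 : R) : Q x -> 0 < t0 ->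
  (forall t, 0 < t -> t <= t0 -> Q (x + t *: v)) -> tcone Q x v.
Proof.
move=> Qx t00 H; split => //.
exists (fun j => t0 * harmonic j), (fun _ => v); split.
- by move=> j; rewrite mulr_gt0 // harmonic_gt0.
- exact: harm_cvg.
- exact: cvg_cst.
- move=> j; apply: H; first by rewrite mulr_gt0 // harmonic_gt0.
  have h1 : harmonic j <= 1 :> R.
    by rewrite /harmonic /= invf_le1 // ?ler1n // ltr0n.
  have h0 : 0 <= harmonic j :> R by exact: harmonic_ge0.
  nra.
Qed.

Lemma ncone_tcone k (Q : set 'rV[R]_k) x y v :
  ncone Q x y -> tcone Q x v -> ip y v <= 0.
Proof.
move=> [Qx Hy] [_ [t [vs [ht _ Hv HQ]]]].
apply: (lim_ip_le0 Hv) => j.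
have := Hy _ (HQ j); rewrite [x + _]addrC addrK ipZr.
by rewrite pmulr_rle0.
Qed.

Lemma small_t (I : eqType) (r : seq I) (s c : I -> R) :
  (forall j, j \in r -> 0 < s j) ->
  exists2 t, 0 < t & forall j, j \in r -> t * `|c j| <= s j.
Proof.
elim: r => [|j0 r IH] H.
  by exists 1 => //.
have [t1 t10 Ht1] : exists2 t, 0 < t & forall j, j \in r -> t * `|c j| <= s j.
  by apply: IH => j jr; apply: H; rewrite inE jr orbT.
have s0 : 0 < s j0 by apply: H; rewrite inE eqxx.
have d0 : 0 < 1 + `|c j0| by rewrite ltr_pwDl.
exists (Num.min t1 (s j0 / (1 + `|c j0|))).
  by rewrite lt_min t10 divr_gt0.
move=> j; rewrite inE => /orP [/eqP ->|jr].
  apply: le_trans (_ : s j0 / (1 + `|c j0|) * (1 + `|c j0|) <= _).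
    apply: ler_pM => //; first by rewrite le_min ltW // divr_ge0 // ltW.
      by rewrite ge_min lexx orbT.
    by rewrite lerDr.
  by rewrite divfK // gt_eqF.
apply: le_trans (Ht1 j jr); apply: ler_wpM2r => //.
by rewrite ge_min lexx.
Qed.

Definition pset k p (J : 'I_p -> bool) (a : 'I_p -> 'rV[R]_k) (b : 'I_p -> R)
  : set 'rV[R]_k := [set y | forall j, J j -> ip (a j) y <= b j].

Definition actv k p (J : 'I_p -> bool) (a : 'I_p -> 'rV[R]_k) (b : 'I_p -> R) x
  : 'I_p -> bool := fun j => J j && (ip (a j) x == b j).

Lemma step_in_pset k p J (a : 'I_p -> 'rV[R]_k) b x v :
  pset J a b x -> (forall j, actv J a b x j -> ip (a j) v <= 0) ->
  exists2 t0, 0 < t0 & forall t, 0 < t -> t <= t0 -> pset J a b (x + t *: v).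
Proof.
move=> Qx Hv.
pose s j := if J j && (ip (a j) x < b j) then b j - ip (a j) x else 1.
have [t0 t00 Ht0] := @small_t _ (index_enum 'I_p) s (fun j => ip (a j) v)
  (fun j _ => ltac:(rewrite /s; case: ifP => // /andP [_]; by rewrite subr_gt0)).
exists t0 => // t t0' tt0 j Jj.
rewrite ipDr ipZr.
have := Qx j Jj; rewrite le_eqVlt => /orP [/eqP E|L].
  have : ip (a j) v <= 0 by apply: Hv; rewrite /actv Jj E eqxx.
  by rewrite E; nra.
have := Ht0 j (mem_index_enum j); rewrite /s Jj L /=.
have : t * ip (a j) v <= t0 * `|ip (a j) v|.
  apply: le_trans (_ : t * `|ip (a j) v| <= _).
    by rewrite ler_pM2l // ler_norm.
  by rewrite ler_wpM2r.
lra.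
Qed.

Lemma tcone_pset k p J (a : 'I_p -> 'rV[R]_k) b x :
  pset J a b x -> tcone (pset J a b) x = pset (actv J a b x) a (fun _ => 0).
Proof.
move=> Qx; apply/seteqP; split => v.
  move=> [_ [t [vs [ht _ Hv HQ]]]] j /andP [Jj /eqP E].
  apply: (lim_ip_le0 Hv) => l.
  have := HQ l j Jj; rewrite ipDr ipZr E -lerBrDl subrr.
  by rewrite pmulr_rle0.
move=> Hv; have [t0 t00 Ht0] := step_in_pset Qx Hv.
exact: (tcone_seg Qx t00 Ht0).
Qed.

Lemma cone_in_ncone k p J (a : 'I_p -> 'rV[R]_k) b x (lam : 'I_p -> R) :
  pset J a b x -> (forall j, 0 <= lam j) ->
  (forall j, ~~ actv J a b x j -> lam j = 0) ->
  ncone (pset J a b) x (\sum_j lam j *: a j).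
Proof.
move=> Qx l0 l1; split => // q Qq.
rewrite ip_suml; apply: (big_ind (fun r : R => r <= 0)) => //.
  by move=> r1 r2; lra.
move=> j _; rewrite ipZl.
case A: (actv J a b x j).
  move: A => /andP [Jj /eqP E].
  rewrite ipBr E; apply: mulr_ge0_le0 => //.
  by rewrite subr_le0; exact: Qq.
by rewrite l1 ?A // mul0r.
Qed.

Lemma ncone_repr k p J (a : 'I_p -> 'rV[R]_k) b x y :
  ncone (pset J a b) x y ->
  exists lam : 'I_p -> R, [/\ (forall j, 0 <= lam j),
    (forall j, ~~ actv J a b x j -> lam j = 0) & y = \sum_j lam j *: a j].
Proof.
move=> [Qx Hy].
pose a' j := if actv J a b x j then a j else 0.
case: (GF a' y) => [[lam [l0 Ey]]|[w [Hw Hyw]]].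
  exists (fun j => if actv J a b x j then lam j else 0); split.
  - by move=> j; case: ifP.
  - by move=> j /negPf ->.
  rewrite Ey; apply: eq_bigr => j _; rewrite /a'.
  by case: ifP => _ //; rewrite scaler0 scale0r.
have Hw' j : actv J a b x j -> ip (a j) w <= 0.
  by move=> A; have := Hw j; rewrite /a' A.
have [t0 t00 Ht0] := step_in_pset Qx Hw'.
have := Hy _ (Ht0 t0 t00 (lexx _)).
rewrite [x + _]addrC addrK ipZr => H.
have : 0 < t0 * ip y w by rewrite mulr_gt0.
lra.
Qed.

End Cones.
Section Calc.
Variable R : realType.
Variable n : nat.
Implicit Types (F : 'rV[R]_n -> R) (p v w x : 'rV[R]_n).

Lemma line_quot F p v (t : R) :
  (fun h : R => h^-1 *: (((fun s : R => F (p + s *: v)) \o shift t) (h *: 1)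
      - F (p + t *: v))) =
  (fun h : R => h^-1 *: ((F \o shift (p + t *: v)) (h *: v) - F (p + t *: v))).
Proof.
apply/funext => h /=; congr (_ *: (F _ - _)).
by rewrite /shift /= [_%:A]mulr1 scalerDl addrCA.
Qed.

Lemma line_is_derive F p v (t : R) : derivable F (p + t *: v) v ->
  is_derive t 1 (fun s : R => F (p + s *: v)) ('D_v F (p + t *: v)).
Proof.
move=> dF; apply: DeriveDef.
  by rewrite /derivable line_quot.
by rewrite /derive line_quot.
Qed.

Lemma mvt_line2 F p0 p1 v (h : R) : 0 < h -> (forall y, derivable F y v) ->
  exists2 c, c \in `]0, h[%R &
  (F (p1 + h *: v) - F (p0 + h *: v)) - (F p1 - F p0) =
  ('D_v F (p1 + c *: v) - 'D_v F (p0 + c *: v)) * h.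
Proof.
move=> h0 dF.
pose f := fun s : R => F (p1 + s *: v) - F (p0 + s *: v).
pose df := fun s : R => 'D_v F (p1 + s *: v) - 'D_v F (p0 + s *: v).
have Hd : forall s : R, is_derive s (1 : R) f (df s).
  move=> s; apply: is_deriveB; exact: line_is_derive.
have [c c0 Hc] := @MVT R f df 0 h h0 (fun s _ => Hd s)
   (derivable_within_continuous (fun s _ => @ex_derive _ _ _ _ _ _ _ (Hd s))).
exists c => //.
move: Hc; rewrite /f /df subr0 !scale0r !addr0 => ->.
by [].
Qed.

Lemma mvt_line F p v (h : R) : 0 < h -> (forall y, derivable F y v) ->
  exists2 c, c \in `]0, h[%R &
  F (p + h *: v) - F p = 'D_v F (p + c *: v) * h.
Proof.
move=> h0 dF.
pose f := fun s : R => F (p + s *: v).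
have Hd : forall s : R, is_derive s (1 : R) f ('D_v F (p + s *: v)).
  move=> s; exact: line_is_derive.
have [c c0 Hc] := @MVT R f (fun s => 'D_v F (p + s *: v)) 0 h h0 (fun s _ => Hd s)
   (derivable_within_continuous (fun s _ => @ex_derive _ _ _ _ _ _ _ (Hd s))).
exists c => //.
by move: Hc; rewrite /f subr0 !scale0r !addr0.
Qed.

Definition Delta F v w x (h : R) :=
  F (x + h *: v + h *: w) - F (x + h *: v) - F (x + h *: w) + F x.

Lemma DeltaC F v w x h : Delta F v w x h = Delta F w v x h.
Proof. rewrite /Delta [x + h *: v + _]addrAC; ring. Qed.

Lemma Delta_mvt F v w x (h : R) : 0 < h ->
  (forall y, derivable F y v) -> (forall y, derivable ('D_v F) y w) ->
  exists xi, exists eta, [/\ 0 < xi < h, 0 < eta < h &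
    Delta F v w x h = 'D_w ('D_v F) (x + xi *: v + eta *: w) * (h * h)].
Proof.
move=> h0 d1 d2.
have [xi xi0 Hxi] := mvt_line2 x (x + h *: w) h0 d1.
have [eta eta0 Heta] := mvt_line (x + xi *: v) h0 d2.
exists xi, eta; split.
- by move: xi0; rewrite in_itv.
- by move: eta0; rewrite in_itv.
have -> : Delta F v w x h =
  (F (x + h *: w + h *: v) - F (x + h *: v)) - (F (x + h *: w) - F x).
  by rewrite /Delta [x + h *: v + _]addrAC; ring.
rewrite Hxi [x + h *: w + _]addrAC Heta mulrA.
by [].
Qed.

Lemma schwarz F : C2fun F -> forall v w x,
  'D_w ('D_v F) x = 'D_v ('D_w F) x.
Proof.
move=> [cF dF cD dD cDD] v w x.
set g1 := 'D_w ('D_v F); set g2 := 'D_v ('D_w F).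
apply/eqP; rewrite -subr_eq0; apply/negPn/negP => Hne.
set e := `|g1 x - g2 x| / 2.
have e0 : 0 < e by rewrite divr_gt0 // normr_gt0.
have near_d (g : 'rV[R]_n -> R) : continuous g ->
    exists2 d, 0 < d & forall y, `|x - y| < d -> `|g x - g y| < e.
  move=> cg; have := @cvgr_dist_lt _ _ _ _ _ g (g x) (cg x) e e0.
  move=> Hn0; have Hn : \forall t \near x, `|g x - g t| < e.
    by apply: Hn0; typeclasses eauto.
  have := iffLR (@nbhs_normP _ _ x _) Hn.
  rewrite /nbhs_ball_ /filter_from /=. move=> [d d0 Hd]; exists d => //.
have [d1 d10 H1] := near_d g1 (cDD v w).
have [d2 d20 H2] := near_d g2 (cDD w v).
set d := Num.min d1 d2.
have d0 : 0 < d by rewrite lt_min d10 d20.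
set K := `|v| + `|w| + 1.
have K0 : 0 < K by rewrite ltr_pwDr // addr_ge0.
set h := d / K.
have h0 : 0 < h by rewrite divr_gt0.
have small xi eta : 0 < xi < h -> 0 < eta < h -> `|x - (x + xi *: v + eta *: w)| < d.
  move=> /andP [xi0 xih] /andP [eta0 etah].
  rewrite opprD opprD addrA addrA subrr add0r -opprD normrN.
  apply: le_lt_trans (ler_normD _ _) _.
  rewrite !normrZ !gtr0_norm //.
  have hK : h * K = d by rewrite /h divfK // gt_eqF.
  have Hv : 0 <= `|v| := normr_ge0 v.
  have Hw : 0 <= `|w| := normr_ge0 w.
  have : xi * `|v| + eta * `|w| <= h * (`|v| + `|w|).
    rewrite mulrDr lerD // ler_wpM2r // ltW //.
  move=> Hle; apply: le_lt_trans Hle _.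
  by rewrite -hK ltr_pM2l // /K ltrDl.
have [xi [eta [xi0 eta0 E1]]] := Delta_mvt x h0 (dF v) (dD v w).
have [xi' [eta' [xi0' eta0' E2]]] := Delta_mvt x h0 (dF w) (dD w v).
have hh : h * h != 0 by rewrite mulf_neq0 // gt_eqF.
have Eg : g1 (x + xi *: v + eta *: w) = g2 (x + xi' *: w + eta' *: v).
  apply: (mulIf hh); rewrite -E1 -E2; exact: DeltaC.
have dd1 : d <= d1 by rewrite /d ge_min lexx.
have dd2 : d <= d2 by rewrite /d ge_min lexx orbT.
have A1 := H1 _ (lt_le_trans (small _ _ xi0 eta0) dd1).
have A2 : `|g2 x - g2 (x + xi' *: w + eta' *: v)| < e.
  apply: H2; rewrite [x + xi' *: w + _]addrAC.
  exact: lt_le_trans (small _ _ eta0' xi0') dd2.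
have : `|g1 x - g2 x| < e + e.
  have -> : g1 x - g2 x = (g1 x - g1 (x + xi *: v + eta *: w)) -
      (g2 x - g2 (x + xi' *: w + eta' *: v)) by rewrite Eg; ring.
  apply: le_lt_trans (ler_normB _ _) _; exact: ltrD.
by rewrite /e -splitr ltxx.
Qed.

End Calc.
Section Hess.
Variables (R : realType) (n m : nat) (g : 'rV[R]_n -> 'rV[R]_m).
Hypothesis C2 : C2map g.

Lemma ipg_sum (y : 'rV[R]_m) :
  (fun z => ip y (g z)) = \sum_(i < m) (y 0 i \*: Defs.comp g i).
Proof.
apply/funext => z; rewrite fct_sumE /ip; apply: eq_bigr => i _; by [].
Qed.

Lemma D1f (y : 'rV[R]_m) v :
  'D_v (fun z => ip y (g z)) = \sum_(i < m) (y 0 i \*: 'D_v (Defs.comp g i)).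
Proof.
apply/funext => z /=; rewrite ipg_sum derive_sum.
  rewrite fct_sumE; apply: eq_bigr => i _; rewrite deriveZ //.
  by have [_ d _ _ _] := C2 i; exact: d.
move=> i; apply: derivableZ.
by have [_ d _ _ _] := C2 i; exact: d.
Qed.

Lemma hess_lin (y : 'rV[R]_m) x :
  hessian (fun z => ip y (g z)) x = \sum_i y 0 i *: hessian (Defs.comp g i) x.
Proof.
apply/matrixP => j k; rewrite summxE !mxE D1f derive_sum.
  apply: eq_bigr => i _; rewrite deriveZ ?mxE //.
  by have [_ _ _ d _] := C2 i; exact: d.
move=> i; apply: derivableZ.
by have [_ _ _ d _] := C2 i; exact: d.
Qed.

Lemma hess_sym i x j k :
  hessian (Defs.comp g i) x j k = hessian (Defs.comp g i) x k j.
Proof. by rewrite !mxE schwarz. Qed.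

Lemma K1 (y : 'rV[R]_m) x u s :
  ip (d2yg g y x u) s = ip y (d2g g x u s).
Proof.
rewrite /d2yg /lapp hess_lin.
have -> : (\sum_i y 0 i *: hessian (Defs.comp g i) x)^T =
          \sum_i y 0 i *: hessian (Defs.comp g i) x.
  apply/matrixP => j k; rewrite !mxE !summxE; apply: eq_bigr => i _.
  by rewrite !mxE schwarz.
rewrite mulmx_sumr ip_suml [RHS]/ip; apply: eq_bigr => i _.
rewrite -scalemxAr ipZl mxE /lapp; congr (_ * _).
by rewrite ip_adj.
Qed.

End Hess.
Section Gen.
Variable R : realType.

Lemma ncone_add k (Q : set 'rV[R]_k) x y z (t : R) :
  ncone Q x y -> ncone Q x z -> 0 <= t -> ncone Q x (y + t *: z).
Proof.
move=> [Qx Hy] [_ Hz] t0; split => // q Qq.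
rewrite ipDl ipZl; have := Hy q Qq; have := Hz q Qq; nra.
Qed.

Lemma ncone_scale k (Q : set 'rV[R]_k) x y (t : R) :
  ncone Q x y -> 0 <= t -> ncone Q x (t *: y).
Proof.
move=> [Qx Hy] t0; split => // q Qq.
rewrite ipZl; have := Hy q Qq; nra.
Qed.

Lemma tcone_ncone k (Q : set 'rV[R]_k) x y z :
  ncone Q x y -> ncone Q x z -> tcone (ncone Q x) y z.
Proof.
move=> Hy Hz; apply: (@tcone_seg _ _ _ _ _ 1) => // t t0 _.
by apply: ncone_add => //; exact: ltW.
Qed.

Lemma ip_comb k p (lam : 'I_p -> R) (v : 'I_p -> 'rV[R]_k) q :
  ip (\sum_j lam j *: v j) q = \sum_j lam j * ip (v j) q.
Proof. by rewrite ip_suml; apply: eq_bigr => j _; rewrite ipZl. Qed.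

Lemma tc_adj k l (M : 'M[R]_(k, l)) p (be : 'I_p -> 'rV[R]_k)
  (K : set 'rV[R]_k) y z :
  (forall q, K q -> exists mu : 'I_p -> R,
       (forall j, 0 <= mu j) /\ q = \sum_j mu j *: be j) ->
  y *m M = 0 -> tcone K y z ->
  exists lam : 'I_p -> R, (forall j, 0 <= lam j) /\
     z *m M = (\sum_j lam j *: be j) *m M.
Proof.
move=> HK yM [Ky [t [vs [ht _ Hv HKv]]]].
case: (GF (fun j => be j *m M) (z *m M)) => [[lam [l0 E]]|[w [Hw Hzw]]].
  exists lam; split => //; rewrite E mulmx_suml; apply: eq_bigr => j _.
  by rewrite scalemxAl.
exfalso.
set q := w *m M^T.
have Hq : forall k0, K k0 -> ip k0 q <= 0.
  move=> k0 /HK [mu [mu0 ->]]; rewrite ip_comb.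
  apply: (big_ind (fun r : R => r <= 0)) => //; first by move=> r1 r2; lra.
  move=> j _; apply: mulr_ge0_le0 => //; rewrite -ip_adj; exact: Hw.
have Hy0 : ip y q = 0 by rewrite -ip_adj yM ip0l.
have : ip q z <= 0.
  apply: (lim_ip_le0 Hv) => j; rewrite ip_sym.
  have := Hq _ (HKv j); rewrite ipDl Hy0 add0r ipZl.
  by rewrite pmulr_rle0.
by rewrite ip_sym -ip_adj; lra.
Qed.

Lemma sum_le0_eq0 p (F : 'I_p -> R) :
  (forall j, F j <= 0) -> 0 <= \sum_j F j -> forall j, F j = 0.
Proof.
move=> H0 Hs j.
have Hs' : \sum_j - F j = 0.
  apply/eqP; rewrite eq_le sumr_ge0 ?andbT; last by move=> i _; rewrite oppr_ge0.
  by rewrite sumrN oppr_le0.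
have := @psumr_eq0P _ _ xpredT (fun j => - F j) (fun i _ => ltac:(rewrite oppr_ge0; exact: H0)) Hs' j isT.
by move/eqP; rewrite oppr_eq0 => /eqP.
Qed.

End Gen.

Section Main.
Variables (R : realType) (n m p : nat) (g : 'rV[R]_n -> 'rV[R]_m).
Variables (xb u : 'rV[R]_n) (a : 'I_p -> 'rV[R]_m) (b : 'I_p -> R).
Hypothesis C2 : C2map g.

Local Notation x := (g xb).
Local Notation P0 := (pset (fun _ => true) a b).
Local Notation act0 := (actv (fun _ => true) a b x).
Local Notation T := (pset act0 a (fun _ => 0)).
Local Notation A := (dg g xb).
Local Notation adj := (dg_adj g xb).
Local Notation w0 := (dg g xb u).
Local Notation act1 := (actv act0 a (fun _ => 0) w0).
Local Notation bT := (pset act1 a (fun _ => 0)).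
Local Notation N := (ncone P0 x).
Local Notation B := (d2g g xb u).
Local Notation D2 y := (d2yg g y xb u).

Hypothesis Dx : P0 x.
Hypothesis Tw0 : T w0.

Lemma HT : tcone P0 x = T.
Proof. exact: tcone_pset. Qed.

Lemma HbT : tcone T w0 = bT.
Proof. exact: tcone_pset. Qed.

Lemma K3 y s : ip (adj y) s = ip y (A s).
Proof. exact: ip_adj. Qed.

Lemma A0 : A 0 = 0.
Proof. by rewrite /dg /lapp mul0mx. Qed.

Lemma B0 : B 0 = 0.
Proof. by apply/rowP => i; rewrite !mxE /lapp mul0mx ip0r. Qed.

Lemma ipK1 y s : ip (D2 y) s = ip y (B s).
Proof. exact: K1. Qed.

Lemma adj_comb (lam : 'I_p -> R) (v : 'I_p -> 'rV[R]_m) :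
  adj (\sum_j lam j *: v j) = \sum_j lam j *: adj (v j).
Proof.
rewrite /dg_adj /ladj mulmx_suml; apply: eq_bigr => j _; by rewrite scalemxAl.
Qed.

Lemma val_eq y z : D2 y + adj z = 0 -> ip y (B u) = - ip z w0.
Proof.
move=> E; have := congr1 (fun v => ip v u) E => /=.
rewrite ipDl ip0l ipK1 K3 => H; lra.
Qed.

Lemma form_val y : d2yg_form g y xb u = ip y (B u).
Proof. by rewrite /d2yg_form ip_sym ipK1. Qed.

Lemma N_T z v : N z -> T v -> ip z v <= 0.
Proof. by rewrite -HT; exact: ncone_tcone. Qed.

Lemma nT y : ncone T w0 y <-> N y /\ ip y w0 = 0.
Proof.
split.
  move=> [_ Hy].
  have h1 : ip y w0 = 0.
    have := Hy 0 (fun j _ => ltac:(by rewrite ip0r)).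
    have := Hy (2%:R *: w0) (fun j Aj => ltac:(by rewrite ipZr; have := @Tw0 j Aj; nra)).
    rewrite sub0r ipNr -{2}(scale1r w0) -scalerBl ipZr.
    have -> : (2%:R - 1 : R) = 1 by lra.
    rewrite mul1r; lra.
  split => //; split => // q Qq.
  have : T (q - x).
    move=> j /andP [_ /eqP E]; rewrite ipBr E subr_le0; exact: Qq.
  move/(Hy _); rewrite ipBr h1 subr0 //.
move=> [Hy h1]; split => // q Tq.
by rewrite ipBr h1 subr0; exact: N_T.
Qed.

Lemma N_bT y q : N y -> ip y w0 = 0 -> bT q -> ip y q <= 0.
Proof.
move=> Ny h1; rewrite -HbT; apply: ncone_tcone.
by apply/nT; split.
Qed.

Lemma cone_P (P : pred 'I_p) (lam : 'I_p -> R) :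
  (forall j, P j -> act0 j) -> (forall j, 0 <= lam j) ->
  N (\sum_j lam j *: (if P j then a j else 0)).
Proof.
move=> PA l0.
have -> : \sum_j lam j *: (if P j then a j else 0) =
          \sum_j (if P j then lam j else 0) *: a j.
  by apply: eq_bigr => j _; case: ifP => _; rewrite ?scaler0 ?scale0r.
apply: cone_in_ncone => // j.
  by case: ifP.
by case: ifP => // /PA ->.
Qed.

Lemma act1_0 j : act1 j -> act0 j.
Proof. by move=> /andP []. Qed.

Lemma nbT_N v y : ncone bT v y -> N y.
Proof.
move=> H; have [lam [l0 l1 ->]] := ncone_repr H.
have -> : \sum_j lam j *: a j =
   \sum_j lam j *: (if actv act1 a (fun _ => 0) v j then a j else 0).
  apply: eq_bigr => j _; case: ifP => // /negbT /l1 ->.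
  by rewrite scale0r scaler0.
apply: cone_P => // j /andP [/act1_0 //].
Qed.

Lemma part_i :
  ([set y | exists a0 s t, T (A s) /\ T t /\ y = A a0 + B s - t] = setT)
  <-> (forall y z, Ccond g P0 xb u y z -> y = 0).
Proof.
split.
  move=> HS y z [H1 H2 H3 H4].
  have : [set y | exists a0 s t, T (A s) /\ T t /\ y = A a0 + B s - t] (- y).
    by rewrite HS.
  move=> [a0 [s [t [Ts [Tt Ey]]]]].
  have E : ip y (- y) = ip y (A a0) + ip y (B s) - ip y t.
    by rewrite Ey ipBr ipDr.
  rewrite -K3 H1 ip0l add0r -ipK1 in E.
  have E2 : D2 y = - adj z by apply/eqP; rewrite -addr_eq0 H2.
  rewrite E2 ipNl K3 ipNr in E.
  have h1 := N_T H4 Ts; have h2 := N_T H3 Tt.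
  apply: ip_le0; lra.
move=> H; apply/seteqP; split => // c _.
pose al := fun j => if act0 j then a j else 0.
pose G : ('I_p + 'I_p)%type -> 'rV[R]_(n + n) := fun i =>
  match i with inl j => row_mx (adj (al j)) (D2 (al j))
             | inr j => row_mx 0 (adj (al j)) end.
pose bb : ('I_p + 'I_p)%type -> R := fun i =>
  match i with inl j => ip (al j) c | inr j => 0 end.
have HG a0 s j : ip (G (inl j)) (row_mx a0 s) = ip (al j) (A a0 + B s).
  by rewrite /G ip_row_mx K3 ipK1 ipDr.
have HG2 a0 s j : ip (G (inr j)) (row_mx a0 s) = ip (al j) (A s).
  by rewrite /G ip_row_mx ip0l add0r K3.
case: (AF G bb) => [[X HX]|[lam [l0 [Hl Hb]]]].
  rewrite -(hsubmxK X) in HX; set a0 := lsubmx X in HX; set s := rsubmx X in HX.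
  exists a0, s, (A a0 + B s - c); split; [|split].
  - move=> j Aj; have := HX (inr j); by rewrite HG2 /al Aj.
  - move=> j Aj; have := HX (inl j); rewrite HG /bb /al Aj /=.
    by move=> h; rewrite /= ipBr; lra.
  - by rewrite opprB addrC subrK.
exfalso.
pose y := \sum_j lam (inl j) *: al j.
pose z := \sum_j lam (inr j) *: al j.
have Hs X : \sum_i lam i * ip (G i) X =
    \sum_j lam (inl j) * ip (G (inl j)) X + \sum_j lam (inr j) * ip (G (inr j)) X.
  by rewrite big_sumType.
have Hadj : adj y = 0.
  apply: ip_all0 => a0; rewrite K3.
  have := Hl (row_mx a0 0); rewrite Hs.
  under eq_bigr do rewrite HG B0 addr0.
  under [X in _ + X]eq_bigr do rewrite HG2 A0 ip0r mulr0.
  by rewrite big1_eq addr0 /y ip_comb.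
have Heq : D2 y + adj z = 0.
  apply: ip_all0 => s; rewrite ipDl ipK1 K3.
  have := Hl (row_mx 0 s); rewrite Hs.
  under eq_bigr do rewrite HG A0 add0r.
  under [X in _ + X]eq_bigr do rewrite HG2.
  by rewrite /y /z !ip_comb.
have Ny : N y by apply: cone_P.
have Nz : N z by apply: cone_P.
have y0 := H y z (And4 Hadj Heq Ny Nz).
move: Hb; rewrite big_sumType /=.
rewrite [X in _ + X]big1 ?addr0; last by move=> j _; rewrite mulr0.
have -> : \sum_j lam (inl j) * ip (al j) c = ip y c by rewrite /y ip_comb.
by rewrite y0 ip0l ltxx.
Qed.

Lemma ipw0_adj y : adj y = 0 -> ip y w0 = 0.
Proof. by move=> h; rewrite -K3 h ip0l. Qed.

Lemma al1_w0 (lam : 'I_p -> R) :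
  ip (\sum_j lam j *: (if act1 j then a j else 0)) w0 = 0.
Proof.
rewrite ip_comb big1 // => j _; case: ifP => [/andP [_ /eqP ->]|_].
  by rewrite mulr0.
by rewrite ip0l mulr0.
Qed.

Lemma rep_T q : ncone T w0 q -> exists mu : 'I_p -> R,
  (forall j, 0 <= mu j) /\ q = \sum_j mu j *: (if act1 j then a j else 0).
Proof.
move=> /ncone_repr [mu [m0 m1 ->]]; exists mu; split => //.
apply: eq_bigr => j _; case: ifP => // /negbT /m1 ->.
by rewrite scale0r scaler0.
Qed.

Lemma ii_1 :
  (forall y z, adj y = 0 -> D2 y + adj z = 0 -> ncone T w0 y -> ncone T w0 z -> y = 0) ->
  (forall y z, Ccond g P0 xb u y z -> ip z w0 = 0 -> y = 0).
Proof.
move=> H y z [h1 h2 h3 h4] hz; apply: (H y z h1 h2); apply/nT; split => //.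
exact: ipw0_adj.
Qed.

Lemma ii_2 :
  (forall y z, adj y = 0 -> D2 y + adj z = 0 -> ncone T w0 y ->
     tcone (ncone T w0) y z -> y = 0) ->
  (forall y z, adj y = 0 -> D2 y + adj z = 0 -> ncone T w0 y -> ncone T w0 z -> y = 0).
Proof.
move=> H y z h1 h2 hy hz; apply: (H y z h1 h2 hy); exact: tcone_ncone.
Qed.

Lemma ii_3 :
  (forall y z, Ccond g P0 xb u y z -> ip z w0 = 0 -> y = 0) ->
  (forall y z, adj y = 0 -> D2 y + adj z = 0 -> ncone T w0 y ->
     tcone (ncone T w0) y z -> y = 0).
Proof.
move=> H y z h1 h2 hy hz.
have h1' : y *m Defs.jacobian g xb = 0 := h1.
have [lam [l0 E]] := tc_adj rep_T h1' hz.
set z' := \sum_j lam j *: (if act1 j then a j else 0) in E.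
have Ez : adj z' = adj z by rewrite /dg_adj /ladj -E.
apply: (H y z'); last exact: al1_w0.
split => //.
- by rewrite Ez.
- by have [] := (nT y).1 hy.
- by apply: cone_P => // j /act1_0.
Qed.

Lemma part_ii1 :
  (forall y z, adj y = 0 -> D2 y + adj z = 0 -> ncone T w0 y -> ncone T w0 z -> y = 0)
  <-> (forall y z, Ccond g P0 xb u y z -> ip z w0 = 0 -> y = 0).
Proof. by split; [exact: ii_1 | move=> H; apply: ii_2; exact: ii_3]. Qed.

Lemma part_ii2 :
  (forall y z, adj y = 0 -> D2 y + adj z = 0 -> ncone T w0 y ->
     tcone (ncone T w0) y z -> y = 0)
  <-> (forall y z, Ccond g P0 xb u y z -> ip z w0 = 0 -> y = 0).
Proof. by split; [move=> H; apply: ii_1; exact: ii_2 | exact: ii_3]. Qed.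

Local Notation ws s := (w_s g xb u s).

Lemma ws_ip y s : adj y = 0 -> ip y (ws s) = 2^-1 * ip y (B u).
Proof. by move=> h; rewrite /w_s ipDr -K3 h ip0l add0r ipZr. Qed.

Lemma val_ge0 y z : Ccond g P0 xb u y z -> 0 <= ip y (B u).
Proof.
move=> [h1 h2 h3 h4]; rewrite (val_eq h2).
by rewrite oppr_ge0; apply: N_T.
Qed.

Lemma iiiG_1 :
  (forall y z, Ccond g P0 xb u y z ->
     (N y /\ adj y = 0 /\ forall yh, N yh -> adj yh = 0 ->
        2^-1 * d2yg_form g yh xb u <= 2^-1 * d2yg_form g y xb u) -> y = 0) ->
  (forall y z s, Ccond g P0 xb u y z -> bT (ws s) -> y = 0).
Proof.
move=> H y z s C bs; apply: (H y z C).
have [h1 h2 h3 h4] := C.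
split; first exact: h3.
split; first exact: h1.
move=> yh Nyh hyh.
rewrite !form_val; apply: ler_wpM2l; first by rewrite invr_ge0 ler0n.
have e1 : ip yh (ws s) <= 0 by apply: N_bT => //; exact: ipw0_adj.
rewrite ws_ip // in e1.
have e2 := val_ge0 C.
have : ip yh (B u) <= 0.
  by move: e1; rewrite pmulr_rle0 // invr_gt0 ltr0n.
lra.
Qed.

Lemma iiiG_2 :
  (forall y z s, Ccond g P0 xb u y z -> bT (ws s) -> y = 0) ->
  (forall y z, Ccond g P0 xb u y z ->
     (N y /\ adj y = 0 /\ forall yh, N yh -> adj yh = 0 ->
        2^-1 * d2yg_form g yh xb u <= 2^-1 * d2yg_form g y xb u) -> y = 0).
Proof.
move=> H y z C [_ [_ Hmax]].
pose al1 j := if act1 j then a j else 0.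
pose dd := 2^-1 *: B u.
case: (AF (fun j => adj (al1 j)) (fun j => - ip (al1 j) dd)) =>
   [[s Hs]|[lam [l0 [Hl Hb]]]].
  apply: (H y z s C) => j A1.
  have := Hs j; rewrite /al1 A1 K3 /w_s ipDr; lra.
exfalso.
pose yh := \sum_j lam j *: al1 j.
have hyh : adj yh = 0.
  apply: ip_all0 => s; rewrite adj_comb ip_comb; exact: Hl.
have Nyh : N yh by apply: cone_P => // j /act1_0.
have pos : 0 < ip yh (B u).
  have : 0 < ip yh dd.
    rewrite /yh ip_comb; move: Hb.
    rewrite (eq_bigr (fun j => - (lam j * ip (al1 j) dd))); last first.
      by move=> j _; rewrite mulrN.
    by rewrite sumrN oppr_lt0.
  by rewrite /dd ipZr pmulr_rgt0 // invr_gt0 ltr0n.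
set v := ip y (B u).
set ka := (`|v| + 1) / ip yh (B u).
have ka0 : 0 <= ka by rewrite divr_ge0 // ?ltW // addr_ge0.
have := Hmax (ka *: yh) (ncone_scale Nyh ka0).
rewrite /dg_adj /ladj -scalemxAl.
have -> : yh *m Defs.jacobian g xb = 0 by [].
rewrite scaler0 => /(_ erefl).
rewrite !form_val ipZl /ka divfK ?gt_eqF //.
rewrite ler_pM2l ?invr_gt0 ?ltr0n //.
have := ler_norm v; rewrite -/v; lra.
Qed.

Lemma part_iiiG :
  (forall y z, Ccond g P0 xb u y z ->
     (N y /\ adj y = 0 /\ forall yh, N yh -> adj yh = 0 ->
        2^-1 * d2yg_form g yh xb u <= 2^-1 * d2yg_form g y xb u) -> y = 0)
  <-> (forall y z s, Ccond g P0 xb u y z -> bT (ws s) -> y = 0).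
Proof. by split; [exact: iiiG_1 | exact: iiiG_2]. Qed.

Lemma iii_2 :
  (forall s y z, adj y = 0 -> D2 y + adj z = 0 -> ncone bT (ws s) y ->
     tcone (ncone bT (ws s)) y z -> y = 0) ->
  (forall s y z, adj y = 0 -> D2 y + adj z = 0 -> ncone bT (ws s) y ->
     ncone bT (ws s) z -> y = 0).
Proof.
move=> H s y z h1 h2 hy hz; apply: (H s y z h1 h2 hy); exact: tcone_ncone.
Qed.

Lemma iii_3 :
  (forall y z s, Ccond g P0 xb u y z -> bT (ws s) -> y = 0) ->
  (forall s y z, adj y = 0 -> D2 y + adj z = 0 -> ncone bT (ws s) y ->
     tcone (ncone bT (ws s)) y z -> y = 0).
Proof.
move=> H s y z h1 h2 hy hz.
set act2 := actv act1 a (fun _ => 0) (ws s).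
have rep : forall q, ncone bT (ws s) q -> exists mu : 'I_p -> R,
  (forall j, 0 <= mu j) /\ q = \sum_j mu j *: (if act2 j then a j else 0).
  move=> q /ncone_repr [mu [m0 m1 ->]]; exists mu; split => //.
  apply: eq_bigr => j _; case: ifP => // /negbT /m1 ->.
  by rewrite scale0r scaler0.
have h1' : y *m Defs.jacobian g xb = 0 := h1.
have [lam [l0 E]] := tc_adj rep h1' hz.
set z' := \sum_j lam j *: (if act2 j then a j else 0) in E.
have Ez : adj z' = adj z by rewrite /dg_adj /ladj -E.
apply: (H y z' s); last by have [] := hy.
split => //.
- by rewrite Ez.
- exact: nbT_N hy.
- by apply: cone_P => // j /andP [/act1_0].
Qed.
Lemma sum_deltaR q (F : 'I_q -> R) (j : 'I_q) :
  \sum_j' F j' * (evec R j) 0 j' = F j.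
Proof.
rewrite (bigD1 j) //= big1 ?addr0; first by rewrite /evec mxE !eqxx mulr1.
by move=> i /negPf ij; rewrite /evec mxE ij andbF mulr0.
Qed.

Lemma sum_deltaV q k (F : 'I_q -> 'rV[R]_k) (j : 'I_q) :
  \sum_j' (evec R j) 0 j' *: F j' = F j.
Proof.
rewrite (bigD1 j) //= big1 ?addr0; first by rewrite /evec mxE !eqxx scale1r.
by move=> i /negPf ij; rewrite /evec mxE ij andbF scale0r.
Qed.

Lemma lp_exists y z s0 : Ccond g P0 xb u y z -> bT (ws s0) ->
  exists s, exists lam : 'I_p -> R, [/\ bT (ws s), (forall j, 0 <= lam j),
     adj (\sum_j lam j *: (if act1 j then a j else 0)) = adj z &
     forall j, lam j * ip (if act1 j then a j else 0) (ws s) = 0].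
Proof.
move=> C bs0; have [h1 h2 hy hz] := C.
pose al1 j := if act1 j then a j else 0.
have hyw0 : ip y w0 = 0 := ipw0_adj h1.
have v0 : ip y (B u) = 0.
  have e1 := val_ge0 C.
  have e2 : ip y (ws s0) <= 0 := N_bT hy hyw0 bs0.
  rewrite ws_ip // in e2.
  have : ip y (B u) <= 0 by move: e2; rewrite pmulr_rle0 // invr_gt0 ltr0n.
  lra.
have hzw0 : ip z w0 = 0 by have := val_eq h2; rewrite v0; lra.
have [nu [n0 n1 Ez]] := ncone_repr hz.
have Ez1 : z = \sum_j nu j *: al1 j.
  have Hterm : forall j, nu j * ip (a j) w0 = 0.
    apply: sum_le0_eq0.
      move=> j; case A0j: (act0 j).
        by apply: mulr_ge0_le0 => //; exact: @Tw0 j A0j.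
      by rewrite n1 ?A0j // mul0r.
    by rewrite -ip_comb -Ez hzw0.
  rewrite Ez; apply: eq_bigr => j _; rewrite /al1.
  case: ifP => // nA1.
  case A0j: (act0 j); last by rewrite n1 ?A0j // scale0r scaler0.
  have nA1' : (act0 j && (ip (a j) w0 == 0)) = false := nA1.
  have nz : ip (a j) w0 != 0 by move: nA1'; rewrite A0j /= => /negbT.
  have := Hterm j; move/eqP; rewrite mulf_eq0 (negPf nz) orbF => /eqP ->.
  by rewrite scale0r scaler0.
pose dd := 2^-1 *: B u.
have wsE s : ws s = A s + dd by [].
have al1_le s j : bT (ws s) -> ip (al1 j) (ws s) <= 0.
  rewrite /al1; case: ifP => [A1 bs|_ _]; last by rewrite ip0l.
  exact: bs.
pose ea (j : 'I_p) : 'rV[R]_p := evec R j.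
pose ek (k : 'I_n) : 'rV[R]_n := evec R k.
pose Mrow (k : 'I_n) : 'rV[R]_p := \row_j ip (adj (al1 j)) (ek k).
pose drow : 'rV[R]_p := \row_j ip (al1 j) dd.
pose I := ('I_p + 'I_p + 'I_n + 'I_n + 'I_1)%type.
pose G : I -> 'rV[R]_(n + p) := fun i => match i with
  | inl (inl (inl (inl j))) => row_mx (adj (al1 j)) 0
  | inl (inl (inl (inr j))) => row_mx 0 (- ea j)
  | inl (inl (inr k)) => row_mx 0 (Mrow k)
  | inl (inr k) => row_mx 0 (- Mrow k)
  | inr _ => row_mx (- adj z) (- drow) end.
pose bb : I -> R := fun i => match i with
  | inl (inl (inl (inl j))) => - ip (al1 j) dd
  | inl (inl (inl (inr j))) => 0
  | inl (inl (inr k)) => ip (adj z) (ek k)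
  | inl (inr k) => - ip (adj z) (ek k)
  | inr _ => 0 end.
have IM L k : ip (Mrow k) L = ip (adj (\sum_j L 0 j *: al1 j)) (ek k).
  rewrite adj_comb ip_comb [LHS]/ip; apply: eq_bigr => j _.
  by rewrite /Mrow mxE mulrC.
have Idr L : ip drow L = \sum_j L 0 j * ip (al1 j) dd.
  rewrite [LHS]/ip; apply: eq_bigr => j _.
  by rewrite /drow mxE mulrC.
have HG1 j s L : ip (G (inl (inl (inl (inl j))))) (row_mx s L) = ip (adj (al1 j)) s.
  by rewrite /G ip_row_mx ip0l addr0.
have HG2 j s L : ip (G (inl (inl (inl (inr j))))) (row_mx s L) = - L 0 j.
  by rewrite /G ip_row_mx ip0l add0r ipNl /ea ip_evec.
have HG3 k s L : ip (G (inl (inl (inr k)))) (row_mx s L) =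
    ip (adj (\sum_j L 0 j *: al1 j)) (ek k).
  by rewrite /G ip_row_mx ip0l add0r IM.
have HG4 k s L : ip (G (inl (inr k))) (row_mx s L) =
    - ip (adj (\sum_j L 0 j *: al1 j)) (ek k).
  by rewrite /G ip_row_mx ip0l add0r ipNl IM.
have HG5 i s L : ip (G (inr i)) (row_mx s L) = - ip (adj z) s - ip drow L.
  by rewrite /G ip_row_mx !ipNl.
have ipek v k : ip v (ek k) = v 0 k by rewrite ip_sym /ek ip_evec.
case: (AF G bb) => [[X HX]|[lam [l0 [Hl Hb]]]].
  rewrite -(hsubmxK X) in HX; set s := lsubmx X in HX; set L := rsubmx X in HX.
  have Q1 j : ip (adj (al1 j)) s <= - ip (al1 j) dd.
    by have := HX (inl (inl (inl (inl j)))); rewrite HG1.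
  have Q2 j : 0 <= L 0 j.
    by have := HX (inl (inl (inl (inr j)))); rewrite HG2 /bb /= oppr_le0.
  have Q34 : adj (\sum_j L 0 j *: al1 j) = adj z.
    apply/rowP => k.
    have := HX (inl (inl (inr k))); have := HX (inl (inr k)).
    rewrite HG3 HG4 /bb /= !ipek => e1 e2.
    apply/eqP; rewrite eq_le e2 /=; lra.
  have Q5 : 0 <= ip (adj z) s + ip drow L.
    by have := HX (inr ord0); rewrite HG5 /bb /=; lra.
  have bs : bT (ws s).
    move=> j A1; have := Q1 j; rewrite /al1 A1 K3 wsE ipDr /=; lra.
  have Fle j : L 0 j * ip (al1 j) (ws s) <= 0.
    apply: mulr_ge0_le0 => //; exact: al1_le.
  have Fsum : 0 <= \sum_j L 0 j * ip (al1 j) (ws s).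
    have -> : \sum_j L 0 j * ip (al1 j) (ws s) = ip (adj z) s + ip drow L.
      rewrite Idr -Q34 K3 ip_comb -big_split /=; apply: eq_bigr => j _.
      by rewrite wsE ipDr mulrDr.
    exact: Q5.
  exists s, (fun j => L 0 j); split => //.
  exact: sum_le0_eq0 Fle Fsum.
exfalso.
pose mu1 j := lam (inl (inl (inl (inl j)))).
pose mu2 j := lam (inl (inl (inl (inr j)))).
pose pp k := lam (inl (inl (inr k))).
pose pm k := lam (inl (inr k)).
pose th := lam (inr ord0).
pose pi := \sum_k (pp k - pm k) *: ek k.
pose Y1 := \sum_j mu1 j *: al1 j.
have M1 (s : 'rV[R]_n) (L : 'rV[R]_p) : \sum_j lam (inl (inl (inl (inl j)))) *
    ip (G (inl (inl (inl (inl j))))) (row_mx s L) = ip (adj Y1) s.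
  by rewrite /Y1 adj_comb ip_comb; apply: eq_bigr => j _; rewrite HG1.
have M2 (s : 'rV[R]_n) (L : 'rV[R]_p) : \sum_j lam (inl (inl (inl (inr j)))) *
    ip (G (inl (inl (inl (inr j))))) (row_mx s L) = - \sum_j mu2 j * L 0 j.
  by rewrite -sumrN; apply: eq_bigr => j _; rewrite HG2 mulrN.
have M3 (s : 'rV[R]_n) (L : 'rV[R]_p) : \sum_k lam (inl (inl (inr k))) *
    ip (G (inl (inl (inr k)))) (row_mx s L) =
    \sum_k pp k * ip (adj (\sum_j L 0 j *: al1 j)) (ek k).
  by apply: eq_bigr => k _; rewrite HG3.
have M4 (s : 'rV[R]_n) (L : 'rV[R]_p) : \sum_k lam (inl (inr k)) * ip (G (inl (inr k))) (row_mx s L) =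
    - \sum_k pm k * ip (adj (\sum_j L 0 j *: al1 j)) (ek k).
  by rewrite -sumrN; apply: eq_bigr => k _; rewrite HG4 mulrN.
have M5 (s : 'rV[R]_n) (L : 'rV[R]_p) : lam (inr ord0) * ip (G (inr ord0)) (row_mx s L) =
    - (th * (ip (adj z) s + ip drow L)).
  by rewrite HG5 -mulrN opprD.
have Mpi (L : 'rV[R]_p) : ip (adj (\sum_j L 0 j *: al1 j)) pi =
     \sum_k pp k * ip (adj (\sum_j L 0 j *: al1 j)) (ek k)
     - \sum_k pm k * ip (adj (\sum_j L 0 j *: al1 j)) (ek k).
  rewrite ip_sym ip_comb -sumrB; apply: eq_bigr => k _.
  by rewrite ip_sym mulrBl.
have Master (s : 'rV[R]_n) (L : 'rV[R]_p) : ip (adj Y1) s - \sum_j mu2 j * L 0 j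
   + ip (adj (\sum_j L 0 j *: al1 j)) pi - th * (ip (adj z) s + ip drow L) = 0.
  have := Hl (row_mx s L); rewrite !big_sumType big_ord1 /=.
  rewrite M1 M2 M3 M4 M5 Mpi => H; lra.
have Z1 : \sum_j mu2 j * (0 : 'rV[R]_p) 0 j = 0.
  by rewrite big1 // => j _; rewrite mxE mulr0.
have Z2 : \sum_j (0 : 'rV[R]_p) 0 j *: al1 j = 0.
  by rewrite big1 // => j _; rewrite mxE scale0r.
have E1 s : ip (adj Y1) s - th * ip (adj z) s = 0.
  have := Master s 0; rewrite Z1 Z2 /dg_adj /ladj mul0mx ip0l ip0r; lra.
have E2 j : mu2 j = ip (adj (al1 j)) pi - th * ip (al1 j) dd.
  have := Master 0 (ea j); rewrite /ea sum_deltaR sum_deltaV !ip0r.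
  rewrite [ip drow _]ip_sym ip_evec /drow mxE; lra.
have E3 : - \sum_j mu1 j * ip (al1 j) dd + ip (adj z) pi < 0.
  have S1 : \sum_j lam (inl (inl (inl (inl j)))) * bb (inl (inl (inl (inl j)))) =
      - \sum_j mu1 j * ip (al1 j) dd.
    by rewrite -sumrN; apply: eq_bigr => j _; rewrite /bb mulrN.
  have S2 : \sum_j lam (inl (inl (inl (inr j)))) * bb (inl (inl (inl (inr j)))) = 0.
    by rewrite big1 // => j _; rewrite /bb mulr0.
  have S3 : \sum_k lam (inl (inl (inr k))) * bb (inl (inl (inr k))) =
      \sum_k pp k * ip (adj z) (ek k) by [].
  have S4 : \sum_k lam (inl (inr k)) * bb (inl (inr k)) =
      - \sum_k pm k * ip (adj z) (ek k).
    by rewrite -sumrN; apply: eq_bigr => k _; rewrite /bb mulrN.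
  have S5 : lam (inr ord0) * bb (inr ord0) = 0 by rewrite /bb mulr0.
  have Sz : ip (adj z) pi = \sum_k pp k * ip (adj z) (ek k)
      - \sum_k pm k * ip (adj z) (ek k).
    rewrite ip_sym ip_comb -sumrB; apply: eq_bigr => k _.
    by rewrite ip_sym mulrBl.
  move: Hb; rewrite !big_sumType big_ord1 /= S1 S2 S3 S4 S5 Sz; lra.
have th0 : 0 <= th := l0 _.
have le_dd j : ip (al1 j) dd <= - ip (adj (al1 j)) s0.
  have := al1_le s0 j bs0; rewrite wsE ipDr K3; lra.
have [th_eq|th_gt] := eqVneq th 0.
  have hY1 : adj Y1 = 0.
    by apply: ip_all0 => s; have := E1 s; rewrite th_eq mul0r subr0.
  have m2 j : 0 <= ip (adj (al1 j)) pi.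
    by have := E2 j; rewrite th_eq mul0r subr0 => <-; exact: l0.
  have hz_pi : 0 <= ip (adj z) pi.
    rewrite K3 Ez1 ip_comb; apply: sumr_ge0 => j _.
    by rewrite -K3; apply: mulr_ge0.
  have hS : \sum_j mu1 j * ip (al1 j) dd <= 0.
    apply: le_trans (_ : \sum_j mu1 j * (- ip (adj (al1 j)) s0) <= _).
      by apply: ler_sum => j _; apply: ler_wpM2l => //; exact: l0.
    have -> : \sum_j mu1 j * (- ip (adj (al1 j)) s0) = - ip (adj Y1) s0.
      by rewrite /Y1 adj_comb ip_comb -sumrN; apply: eq_bigr => j _; rewrite mulrN.
    by rewrite hY1 ip0l oppr0.
  have : 0 <= - \sum_j mu1 j * ip (al1 j) dd + ip (adj z) pi.
    by rewrite addr_ge0 // oppr_ge0.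
  by rewrite leNgt E3.
have thp : 0 < th by rewrite lt_def th_gt th0.
have hS : th * \sum_j mu1 j * ip (al1 j) dd <= th * ip (adj z) pi.
  have := E1 pi => e1.
  have -> : th * ip (adj z) pi = ip (adj Y1) pi.
    by move/eqP: e1; rewrite subr_eq0 => /eqP ->.
  rewrite /Y1 adj_comb ip_comb mulr_sumr; apply: ler_sum => j _.
  rewrite mulrCA; apply: ler_wpM2l; first exact: l0.
  rewrite -subr_ge0 -E2; exact: l0.
have : 0 <= th * (- \sum_j mu1 j * ip (al1 j) dd + ip (adj z) pi).
  by rewrite mulrDr mulrN addrC subr_ge0.
by rewrite pmulr_rge0 // leNgt E3.
Qed.

Lemma iii_1 :
  (forall s y z, adj y = 0 -> D2 y + adj z = 0 -> ncone bT (ws s) y ->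
     ncone bT (ws s) z -> y = 0) ->
  (forall y z s, Ccond g P0 xb u y z -> bT (ws s) -> y = 0).
Proof.
move=> H y z s0 C bs0.
have [h1 h2 hy hz] := C.
have [s [lam [bs l0 Eadj Hc]]] := lp_exists C bs0.
set z' := \sum_j lam j *: (if act1 j then a j else 0) in Eadj.
have hyw0 := ipw0_adj h1.
have v0 : ip y (B u) = 0.
  have e1 := val_ge0 C.
  have e2 : ip y (ws s0) <= 0 := N_bT hy hyw0 bs0.
  rewrite ws_ip // in e2.
  have : ip y (B u) <= 0 by move: e2; rewrite pmulr_rle0 // invr_gt0 ltr0n.
  by move=> e3; apply/eqP; rewrite eq_le e3 e1.
apply: (H s y z' h1).
- by rewrite Eadj.
- split => // q bq.
  rewrite ipBr ws_ip // v0 mulr0 subr0; exact: N_bT.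
set act2 := actv act1 a (fun _ => 0) (ws s).
have -> : z' = \sum_j (if act2 j then lam j else 0) *: a j.
  apply: eq_bigr => j _.
  case A2: (act2 j).
    have A1 : act1 j by move: A2 => /andP [].
    by rewrite A1.
  case A1: (act1 j); last by rewrite scaler0 scale0r.
  have A2' : (act1 j && (ip (a j) (ws s) == 0)) = false := A2.
  have nz : ip (a j) (ws s) != 0 by move: A2'; rewrite A1 /= => /negbT.
  have := Hc j; rewrite A1 => /eqP; rewrite mulf_eq0 (negPf nz) orbF => /eqP ->.
  by rewrite !scale0r.
apply: cone_in_ncone => // j.
  by case: ifP.
by rewrite /act2 => /negPf ->.
Qed.

Lemma part_iii1 :
  (forall s y z, adj y = 0 -> D2 y + adj z = 0 -> ncone bT (ws s) y ->
     ncone bT (ws s) z -> y = 0)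
  <-> (forall y z s, Ccond g P0 xb u y z -> bT (ws s) -> y = 0).
Proof. by split; [exact: iii_1 | move=> H; apply: iii_2; exact: iii_3]. Qed.

Lemma part_iii2 :
  (forall s y z, adj y = 0 -> D2 y + adj z = 0 -> ncone bT (ws s) y ->
     tcone (ncone bT (ws s)) y z -> y = 0)
  <-> (forall y z s, Ccond g P0 xb u y z -> bT (ws s) -> y = 0).
Proof. by split; [move=> H; apply: iii_1; exact: iii_2 | exact: iii_3]. Qed.

End Main.

Unset Implicit Arguments.

Theorem proposition3p11 (R : realType) (n m : nat)
  (g : 'rV[R]_n -> 'rV[R]_m) (D : set 'rV[R]_m) (xb u : 'rV[R]_n) :
  C2map g -> polyhedral D -> D (g xb) -> unit_sphere u ->
  tcone D (g xb) (dg g xb u) ->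
  (* (i) *)
  ([set y | exists a s t, tcone D (g xb) (dg g xb s) /\ tcone D (g xb) t /\
       y = dg g xb a + d2g g xb u s - t] = setT
   <-> (forall y z, Ccond g D xb u y z -> y = 0))
  (* (ii), first variant *)
  /\ ((forall y z, dg_adj g xb y = 0 -> d2yg g y xb u + dg_adj g xb z = 0 ->
         ncone (tcone D (g xb)) (dg g xb u) y ->
         ncone (tcone D (g xb)) (dg g xb u) z -> y = 0)
      <-> (forall y z, Ccond g D xb u y z -> ip z (dg g xb u) = 0 -> y = 0))
  (* (ii), second variant *)
  /\ ((forall y z, dg_adj g xb y = 0 -> d2yg g y xb u + dg_adj g xb z = 0 ->
         ncone (tcone D (g xb)) (dg g xb u) y ->
         tcone (ncone (tcone D (g xb)) (dg g xb u)) y z -> y = 0)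
      <-> (forall y z, Ccond g D xb u y z -> ip z (dg g xb u) = 0 -> y = 0))
  (* (iii), Gfrerer's condition *)
  /\ ((forall y z, Ccond g D xb u y z ->
         (ncone D (g xb) y /\ dg_adj g xb y = 0 /\
          forall yh, ncone D (g xb) yh -> dg_adj g xb yh = 0 ->
            2^-1 * d2yg_form g yh xb u <= 2^-1 * d2yg_form g y xb u) ->
         y = 0)
      <-> (forall y z s, Ccond g D xb u y z -> bT g D xb u (w_s g xb u s) -> y = 0))
  (* (iii), first variant of the second condition *)
  /\ ((forall s y z, dg_adj g xb y = 0 -> d2yg g y xb u + dg_adj g xb z = 0 ->
         ncone (bT g D xb u) (w_s g xb u s) y ->
         ncone (bT g D xb u) (w_s g xb u s) z -> y = 0)
      <-> (forall y z s, Ccond g D xb u y z -> bT g D xb u (w_s g xb u s) -> y = 0))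
  (* (iii), second variant of the second condition *)
  /\ ((forall s y z, dg_adj g xb y = 0 -> d2yg g y xb u + dg_adj g xb z = 0 ->
         ncone (bT g D xb u) (w_s g xb u s) y ->
         tcone (ncone (bT g D xb u) (w_s g xb u s)) y z -> y = 0)
      <-> (forall y z s, Ccond g D xb u y z -> bT g D xb u (w_s g xb u s) -> y = 0)).
Proof.
move=> C2 [p [a [b HD]]] Dx _ Tw0.
have HD' : D = pset (fun _ => true) a b.
  rewrite HD; apply/seteqP; split => [y H j _|y H j]; first exact: H.
  exact: H j isT.
subst D.
have Dx' : pset (fun _ => true) a b (g xb) by rewrite -HD'.
rewrite HD' (HT Dx') in Tw0 *.
rewrite /Defs.bT (HT Dx') (HbT Tw0).
split; first by apply: part_i.
split; first by apply: part_ii1.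
split; first by apply: part_ii2.
split; first by apply: part_iiiG.
split; first by apply: part_iii1.
by apply: part_iii2.
Qed.
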